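(* Let $p\in(0,1/2)$ be a fixed constant, and let $k=k(n)$ and $\delta=\delta(n)$ satisfy $k=o(n)$ and $\delta=o(1)$ as $n\to\infty$. Then there exists a variable-length algorithm that computes $\mathsf{TH}_k$ from noisy queries with worst-case error probability at most $\delta$, i.e. $\max_{\mathbf{x}\in\{0,1\}^n}\mathbb{P}(\widehat{\mathsf{TH}}_k\neq\mathsf{TH}_k(\mathbf{x})\mid\mathbf{x})\le\delta$, and whose number of queries $M$ satisfies \[ \mathbb{E}[M\mid\mathbf{x}]\le(1+o(1))\,\frac{n\log\frac{k}{\delta}}{D_{\mathsf{KL}}(p\|1-p)} \] for every input instance $\mathbf{x}\in\{0,1\}^n$.
   Context: For $\mathbf{x}=(x_1,\dots,x_n)\in\{0,1\}^n$ and a positive integer $k$, the threshold-$k$ function is $\mathsf{TH}_k(\mathbf{x})=1$ if $\sum_{i=1}^n x_i\ge k$ and $\mathsf{TH}_k(\mathbf{x})=0$ otherwise. Noisy query model: at each time step the algorithm chooses an index $i\in[n]$ (possibly depending on all previous responses) and observes $x_i\oplus Z$, where $Z\sim\mathsf{Bern}(p)$ is independent of everything else; $p$ is known to the algorithm. A variable-length algorithm may decide adaptively when to stop (so the number of queries $M$ is random), and then outputs an estimate $\widehat{\mathsf{TH}}_k\in\{0,1\}$. $D_{\mathsf{KL}}(p\|1-p)=(1-2p)\log\frac{1-p}{p}$; $\log$ is the natural logarithm. The $o(1)$ terms are with respect to $n\to\infty$. *)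

(* Defs.v *)
From HB Require Import structures.
From mathcomp Require Import all_boot all_order all_algebra.
From mathcomp Require Import all_classical all_reals all_analysis.
Set Implicit Arguments. Unset Strict Implicit. Unset Printing Implicit Defensive.
Import Order.TTheory GRing.Theory Num.Theory.
Local Open Scope ring_scope.

Definition TH (n k : nat) (x : 'I_n -> bool) : bool :=
  (k <= \sum_(i < n) (x i : nat))%N.

(* A deterministic variable-length adaptive algorithm on n bits:
   given the sequence of noisy responses observed so far, it either
   queries an index (inl i) or stops and outputs an estimate (inr b). *)
Definition strategy (n : nat) := seq bool -> ('I_n + bool)%type.

Section Defs.
Variable R : realType.

(* probability of observing response r when the algorithm takes action a
   (0 if the algorithm has stopped). The response is x_i xor Z, Z~Bern(p). *)
Definition step_prob (p : R) (n : nat) (x : 'I_n -> bool)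
  (a : ('I_n + bool)%type) (r : bool) : R :=
  match a with
  | inl i => if r == x i then 1 - p else p
  | inr _ => 0
  end.

(* probability that the response history begins with h (the algorithm having
   queried at every proper prefix of h). *)
Definition reach (p : R) (n : nat) (A : strategy n) (x : 'I_n -> bool)
  (h : seq bool) : R :=
  \prod_(t < size h) step_prob p x (A (take t h)) (nth false h t).

(* P(M > m | x) : the algorithm makes more than m queries. *)
Definition prob_more (p : R) (n : nat) (A : strategy n) (x : 'I_n -> bool)
  (m : nat) : R :=
  \sum_(h : m.-tuple bool)
     reach p A x h * (if A h is inl _ then 1 else 0).

(* P(M = m and output != TH_k(x) | x). *)
Definition prob_err_at (p : R) (n k : nat) (A : strategy n)
  (x : 'I_n -> bool) (m : nat) : R :=
  \sum_(h : m.-tuple bool)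
     reach p A x h * (if A h is inr b then (b != TH k x)%:R else 0).

(* P(output != TH_k(x) | x) <= d  (sum over all stopping times m;
   stated as a bound on every partial sum of the nonnegative series). *)
Definition error_le (p : R) (n k : nat) (A : strategy n)
  (x : 'I_n -> bool) (d : R) : Prop :=
  forall N : nat, \sum_(m < N) prob_err_at p k A x m <= d.

(* E[M | x] <= B, using E[M] = sum_{m>=0} P(M > m) (valid in [0, +oo],
   so this also forces almost-sure termination). *)
Definition expected_queries_le (p : R) (n : nat) (A : strategy n)
  (x : 'I_n -> bool) (B : R) : Prop :=
  forall N : nat, \sum_(m < N) prob_more p A x m <= B.

Definition DKL (p : R) : R := (1 - 2 * p) * ln ((1 - p) / p).

End Defs.

(* Main.v *)
Require Import Defs.
From HB Require Import structures.
From mathcomp Require Import all_boot all_order all_algebra.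
From mathcomp Require Import all_classical all_reals all_analysis.
From mathcomp Require Import zify ring lra.
Import Order.TTheory GRing.Theory Num.Theory.
Import numFieldNormedType.Exports.
Local Open Scope ring_scope.
Set Implicit Arguments. Unset Strict Implicit. Unset Printing Implicit Defensive.

Lemma sum_tupleS (R : realType) m (f : m.+1.-tuple bool -> R) :
  \sum_(t : m.+1.-tuple bool) f t =
  \sum_(r : bool) \sum_(h : m.-tuple bool) f [tuple of r :: h].
Proof.
rewrite pair_big /=.
rewrite (reindex (fun p : bool * m.-tuple bool => [tuple of p.1 :: p.2])) //=.
exists (fun t : m.+1.-tuple bool => (thead t, [tuple of behead t])).
  by move=> [r h] _ /=; congr pair; apply/val_inj.
by move=> t _; case/tupleP: t => r h; apply/val_inj.
Qed.

Lemma sum_tuple0 (R : realType) (f : 0.-tuple bool -> R) :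
  \sum_(t : 0.-tuple bool) f t = f [tuple].
Proof.
rewrite (big_pred1 [tuple]) // => t /=; by rewrite tuple0 /= eq_refl.
Qed.

Lemma reach_cons (R : realType) (p : R) n (A : strategy n) x r h :
  reach p A x (r :: h) = step_prob p x (A [::]) r * reach p (fun h' => A (r :: h')) x h.
Proof.
rewrite /reach /= big_ord_recl /=; congr (_ * _).
Qed.

Definition G (R : realType) (p : R) n (A : strategy n) x (g : seq bool -> R) m :=
  \sum_(t : m.-tuple bool) reach p A x t * g t.

Lemma step_prob_ge0 (R : realType) (p : R) n x a r :
  0 <= p <= 1 -> 0 <= @step_prob R p n x a r.
Proof.
move=> /andP[p0 p1]; case: a => [i|b] //=; case: ifP => _ //; by rewrite subr_ge0.
Qed.

Lemma GS (R : realType) (p : R) n (A : strategy n) x g m :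
  G p A x g m.+1 = \sum_(r : bool) step_prob p x (A [::]) r *
      G p (fun h' => A (r :: h')) x (fun h' => g (r :: h')) m.
Proof.
rewrite /G sum_tupleS; apply: eq_bigr => r _; rewrite mulr_sumr.
by apply: eq_bigr => t _; rewrite /= reach_cons mulrA.
Qed.

Lemma G0 (R : realType) (p : R) n (A : strategy n) x g :
  G p A x g 0 = g [::].
Proof. by rewrite /G sum_tuple0 /reach /= big_ord0 mul1r. Qed.

Lemma drift (R : realType) (p : R) n x : 0 <= p <= 1 ->
  forall N (A : strategy n) (V g : seq bool -> R),
  (forall h, 0 <= V h) ->
  (forall h, \sum_(r : bool) step_prob p x (A h) r * V (rcons h r) + g h <= V h) ->
  \sum_(m < N) G p A x g m <= V [::].
Proof.
move=> hp N; elim: N => [|N IH] A V g V0 H; first by rewrite big_ord0.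
rewrite -(big_mkord xpredT) big_nat_recl // G0.
under eq_bigr do rewrite GS.
rewrite exchange_big /= addrC.
apply: le_trans (H [::]); rewrite lerD2r.
apply: ler_sum => r _; rewrite -mulr_sumr.
apply: ler_wpM2l; first exact: step_prob_ge0.
rewrite big_mkord.
apply: (IH (fun h' => A (r :: h')) (fun h => V (r :: h))) => // h.

Qed.

Definition stp (a b : nat) (s : nat * nat * nat) (r : bool) : nat * nat * nat :=
  let: (j, u, c) := s in
  if r then (if (a + b <= u.+1)%N then (j.+1, b, c.+1) else (j, u.+1, c))
  else (if (u <= 1)%N then (j.+1, b, c) else (j, u.-1, c)).

Definition st (a b : nat) (h : seq bool) := foldl (stp a b) (0%N, b, 0%N) h.

Definition alg (n k a b : nat) : strategy n := fun h =>
  let: (j, u, c) := st a b h in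
  if (c < k)%N then (if (insub j : option 'I_n) is Some i then inl i else inr false)
  else inr true.

Definition xb n (x : 'I_n -> bool) (j : nat) : bool :=
  if (insub j : option 'I_n) is Some i then x i else false.

Definition On n (x : 'I_n -> bool) j := (\sum_(i < j) (xb x i : nat))%N.
Definition Zn n (x : 'I_n -> bool) j := (\sum_(i < j) ((i < n) && ~~ xb x i : nat))%N.

Lemma xbE n (x : 'I_n -> bool) (i : 'I_n) : xb x i = x i.
Proof. by rewrite /xb valK. Qed.

Lemma xb_out n (x : 'I_n -> bool) j : (n <= j)%N -> xb x j = false.
Proof. by move=> h; rewrite /xb insubF // ltnNge h. Qed.

Lemma OnS n (x : 'I_n -> bool) j : On x j.+1 = (On x j + xb x j)%N.
Proof. by rewrite /On big_ord_recr. Qed.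

Lemma ZnS n (x : 'I_n -> bool) j : Zn x j.+1 = (Zn x j + ((j < n) && ~~ xb x j))%N.
Proof. by rewrite /Zn big_ord_recr. Qed.

Lemma On_mono n (x : 'I_n -> bool) j j' : (j <= j')%N -> (On x j <= On x j')%N.
Proof.
move=> /subnK <-; elim: (j' - j)%N => [|d IH] //=.
by rewrite addSn OnS; apply: leq_trans IH (leq_addr _ _).
Qed.

Lemma Zn_mono n (x : 'I_n -> bool) j j' : (j <= j')%N -> (Zn x j <= Zn x j')%N.
Proof.
move=> /subnK <-; elim: (j' - j)%N => [|d IH] //=.
by rewrite addSn ZnS; apply: leq_trans IH (leq_addr _ _).
Qed.

Lemma OZn n (x : 'I_n -> bool) j : (j <= n)%N -> (On x j + Zn x j = j)%N.
Proof.
elim: j => [|j IH] hj; first by rewrite /On /Zn !big_ord0.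
rewrite OnS ZnS hj /=; have := IH (ltnW hj); case: (xb x j) => /=; lia.
Qed.

Lemma st_rcons a b h r : st a b (rcons h r) = stp a b (st a b h) r.
Proof. by rewrite /st foldl_rcons. Qed.

Lemma st_inv a b h : (0 < a)%N -> (0 < b)%N ->
  let: (j, u, c) := st a b h in (0 < u)%N && (u < a + b)%N.
Proof.
move=> ha hb; elim/last_ind: h => [|h r IH]; first by rewrite /st /=; lia.
rewrite st_rcons; move: IH; case: (st a b h) => [[j u] c] /= /andP[h1 h2].
case: r; case: ifP => /=; lia.
Qed.

Lemma On_le n (x : 'I_n -> bool) j : (On x j <= On x n)%N.
Proof.
case: (leqP j n) => h; first exact: On_mono.
move/ltnW/subnK: h => <-; elim: (j - n)%N => [|d IH] //.
by rewrite addSn OnS xb_out ?addn0 // leq_addl.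
Qed.

Lemma Zn_le n (x : 'I_n -> bool) j : (Zn x j <= Zn x n)%N.
Proof.
case: (leqP j n) => h; first exact: Zn_mono.
move/ltnW/subnK: h => <-; elim: (j - n)%N => [|d IH] //.
rewrite addSn ZnS; have -> : (d + n < n)%N = false by lia.
by rewrite addn0.
Qed.

Definition Phi (R : realType) n (x : 'I_n -> bool) (k a b : nat) (s : nat * nat * nat) : R :=
  let: (j, u, c) := s in
  if (j < n)%N && (c < k)%N then
    (b * (Zn x n - Zn x j) + a * minn (On x n - On x j) (k - c))%N%:R
    + (if xb x j then b%:R - u%:R else u%:R - b%:R)
  else 0.
Arguments Phi {R n} x k a b s.

Lemma natle (R : realType) (X Y : nat) : (X <= Y)%N -> (X%:R : R) <= Y%:R.
Proof. by rewrite ler_nat. Qed.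

Lemma Phi_step (R : realType) n (x : 'I_n -> bool) k a b j u c :
  (0 < a)%N -> (0 < b)%N -> (j < n)%N -> (c < k)%N -> (0 < u)%N -> (u < a + b)%N ->
  let d : R := if xb x j then -1 else 1 in
  Phi x k a b (stp a b (j, u, c) true) <= Phi x k a b (j, u, c) + d /\
  Phi x k a b (stp a b (j, u, c) false) <= Phi x k a b (j, u, c) - d.
Proof.
move=> ha hb hj hc hu1 hu2 d.
have O1 := OnS x j; have Z1 : Zn x j.+1 = (Zn x j + ~~ xb x j)%N by rewrite ZnS hj.
have O2 : (On x j.+1 <= On x n)%N by apply: On_mono.
have Z2 : (Zn x j.+1 <= Zn x n)%N by apply: Zn_mono.
rewrite /= hj hc /= /d.
set N := (b * (Zn x n - Zn x j) + _)%N.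
have UT : (a + b <= u.+1)%N -> (u%:R : R) = a%:R + b%:R - 1.
  move=> h; have : (u.+1 = a + b)%N by lia.
  by move/(congr1 (fun m => m%:R : R)); rewrite natrD -natr1 => ?; lra.
have UF : (u <= 1)%N -> (u%:R : R) = 1.
  by move=> h; have -> : u = 1%N by lia.
have UFi : ~~ (u <= 1)%N -> (u.-1%:R : R) = u%:R - 1.
  by move=> h; rewrite -subn1 natrB //; lia.
case E: (xb x j); rewrite E /= in Z1 O1 *; split.
-
  case: ifP => hab /=; last by rewrite hj hc E -natr1 -/N /=; lra.
  rewrite (UT hab); case: ifP => _.
    case: (xb x j.+1); rewrite subrr addr0;
    (have : (b * (Zn x n - Zn x j.+1) + a * minn (On x n - On x j.+1) (k - c.+1) + a <= N)%N
        by rewrite /N; nia);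
    rewrite -(ler_nat R) !natrD => ?; lra.
  have : (a <= N)%N by rewrite /N; nia.
  move/(natle R) => ?; lra.
-
  case: ifP => hab /=; last by rewrite hj hc E (UFi (negbT hab)) -/N /=; lra.
  rewrite (UF hab); case: ifP => _.
    case: (xb x j.+1); rewrite subrr addr0;
    (have : (b * (Zn x n - Zn x j.+1) + a * minn (On x n - On x j.+1) (k - c) <= N + b)%N
        by rewrite /N; nia);
    rewrite -(ler_nat R) !natrD => ?; lra.
  have : (0 <= N)%N by [].
  move/(natle R) => ?; have := ler0n R b; lra.
-
  case: ifP => hab /=; last by rewrite hj hc E -natr1 -/N /=; lra.
  rewrite (UT hab); case: ifP => _.
    case: (xb x j.+1); rewrite subrr addr0;
    (have : (b * (Zn x n - Zn x j.+1) + a * minn (On x n - On x j.+1) (k - c.+1) <= N + a)%N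
        by rewrite /N; nia);
    rewrite -(ler_nat R) !natrD => ?; lra.
  have : (0 <= N)%N by [].
  move/(natle R) => ?; have := ler0n R a; lra.
-
  case: ifP => hab /=; last by rewrite hj hc E (UFi (negbT hab)) -/N /=; lra.
  rewrite (UF hab); case: ifP => _.
    case: (xb x j.+1); rewrite subrr addr0;
    (have : (b * (Zn x n - Zn x j.+1) + a * minn (On x n - On x j.+1) (k - c) + b <= N)%N
        by rewrite /N; nia);
    rewrite -(ler_nat R) !natrD => ?; lra.
  have : (b <= N)%N by rewrite /N; nia.
  move/(natle R) => ?; lra.
Qed.

Definition Psi0 (R : realType) n (x : 'I_n -> bool) (a b : nat) (rho : R) (s : nat * nat * nat) : R :=
  let: (j, u, c) := s in
  ((On x j < c)%N : nat)%:R + ((j < n)%N && ~~ xb x j : nat)%:R * rho ^+ (a + b - u)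
  + rho ^+ a * (Zn x n - Zn x j.+1)%N%:R.

Definition Psi1 (R : realType) n (x : 'I_n -> bool) (k b : nat) (rho : R) (s : nat * nat * nat) : R :=
  let: (j, u, c) := s in
  ((c < minn (On x j) k)%N : nat)%:R + (xb x j && (On x j < k)%N : nat)%:R * rho ^+ u
  + rho ^+ b * (minn (On x n) k - minn (On x j.+1) k)%N%:R.

Lemma Psi0_reset (R : realType) n (x : 'I_n -> bool) a b (rho : R) j c :
  Psi0 x a b rho (j, b, c) = ((On x j < c)%N : nat)%:R + rho ^+ a * (Zn x n - Zn x j)%N%:R.
Proof.
rewrite /= addnK -addrA; congr (_ + _).
have h1 := ZnS x j; have h2 := Zn_le x j.+1.
have -> : (Zn x n - Zn x j = ((j < n)%N && ~~ xb x j) + (Zn x n - Zn x j.+1))%N by lia.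
by rewrite natrD mulrDr mulrC.
Qed.

Lemma Psi1_reset (R : realType) n (x : 'I_n -> bool) k b (rho : R) j c :
  Psi1 x k b rho (j, b, c) = ((c < minn (On x j) k)%N : nat)%:R
     + rho ^+ b * (minn (On x n) k - minn (On x j) k)%N%:R.
Proof.
rewrite /= -addrA; congr (_ + _).
have h1 := OnS x j; have h2 := On_le x j.+1.
have -> : (minn (On x n) k - minn (On x j) k = (xb x j && (On x j < k)%N)
   + (minn (On x n) k - minn (On x j.+1) k))%N.
  by move: h1 h2; case: (xb x j) => /=; lia.
by rewrite natrD mulrDr mulrC.
Qed.

Lemma mart (R : realType) (p q rho : R) m :
  p + q = 1 -> rho * q = p -> p * rho ^+ m + q * rho ^+ m.+2 = rho ^+ m.+1.
Proof.
move=> h1 h2; rewrite !exprS -h2.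
have e : q + rho * q = 1 by rewrite h2 addrC.
rewrite -[RHS]mulr1 -e; ring.
Qed.

Lemma ble (R : realType) (b1 b2 : bool) : (b1 -> b2) -> ((b1 : nat)%:R : R) <= (b2 : nat)%:R.
Proof. by case: b1; case: b2 => //= /(_ isT). Qed.

Lemma ble1 (R : realType) (b1 : bool) : ((b1 : nat)%:R : R) <= 1.
Proof. by case: b1. Qed.

Lemma comb (R : realType) (al be X Y P1 P2 P : R) : 0 <= al -> 0 <= be ->
  X <= P1 -> Y <= P2 -> al * P1 + be * P2 <= P -> al * X + be * Y <= P.
Proof.
move=> h1 h2 h3 h4; apply: le_trans; apply: lerD; exact: ler_wpM2l.
Qed.

Lemma Psi0_step (R : realType) (p q rho : R) n (x : 'I_n -> bool) a b j u c :
  0 <= p -> 0 <= q -> p + q = 1 -> rho * q = p -> 0 <= rho ->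
  (0 < a)%N -> (0 < b)%N -> (j < n)%N -> (0 < u)%N -> (u < a + b)%N ->
  (if xb x j then q else p) * Psi0 x a b rho (stp a b (j, u, c) true)
  + (if xb x j then p else q) * Psi0 x a b rho (stp a b (j, u, c) false)
  <= Psi0 x a b rho (j, u, c).
Proof.
move=> hp hq hpq hr hr0 ha hb hj hu1 hu2.
have O1 := OnS x j; have Z1 : Zn x j.+1 = (Zn x j + ~~ xb x j)%N by rewrite ZnS hj.
rewrite [X in _ <= X]/=.
set C := rho ^+ a * _.
set I := ((On x j < c)%N : nat)%:R.
case E: (xb x j); rewrite E /= in O1 Z1 *.
- rewrite hj /= mul0r addr0 -/I.
  apply: (@comb _ _ _ _ _ (I + C) (I + C)) => //; last by rewrite -mulrDl addrC hpq mul1r.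
  + case: ifP => hab; first (rewrite Psi0_reset -/C lerD2r; apply: ble; lia).
    by rewrite /= hj E /= mul0r addr0.
  + case: ifP => hab; first (rewrite Psi0_reset -/C lerD2r; apply: ble; lia).
    by rewrite /= hj E /= mul0r addr0.
- rewrite hj /= mul1r -/I.
  have [m em] : exists m, (a + b - u = m.+1)%N by exists (a + b - u).-1; lia.
  rewrite em.
  apply: (@comb _ _ _ _ _ (I + rho ^+ m + C) (I + rho ^+ m.+2 + C)) => //.
  + case: ifP => hab.
      rewrite Psi0_reset -/C; have -> : m = 0%N by lia.
      rewrite expr0 lerD2r; have := ble1 R ((On x j.+1 < c.+1)%N).
      have : 0 <= I by rewrite /I ler0n.
      lra.
    rewrite /= hj E /= mul1r -/I; have -> : (a + b - u.+1 = m)%N by lia. by [].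
  + case: ifP => hab.
      rewrite Psi0_reset -/C O1 addn0 -/I; have := exprn_ge0 m.+2 hr0; lra.
    rewrite /= hj E /= mul1r -/I; have -> : (a + b - u.-1 = m.+2)%N by lia. by [].
  + have := mart m hpq hr; move=> e.
    rewrite -e; set W := rho ^+ m; set W2 := rho ^+ m.+2.
    have -> : p * (I + W + C) + q * (I + W2 + C) = (p + q) * (I + C) + (p * W + q * W2) by ring.
    by rewrite hpq mul1r; lra.
Qed.

Lemma Psi1_step (R : realType) (p q rho : R) n (x : 'I_n -> bool) k a b j u c :
  0 <= p -> 0 <= q -> p + q = 1 -> rho * q = p -> 0 <= rho ->
  (0 < a)%N -> (0 < b)%N -> (j < n)%N -> (0 < u)%N -> (u < a + b)%N ->
  (if xb x j then q else p) * Psi1 x k b rho (stp a b (j, u, c) true)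
  + (if xb x j then p else q) * Psi1 x k b rho (stp a b (j, u, c) false)
  <= Psi1 x k b rho (j, u, c).
Proof.
move=> hp hq hpq hr hr0 ha hb hj hu1 hu2.
have O1 := OnS x j.
rewrite [X in _ <= X]/=.
set C := rho ^+ b * _.
set I := ((c < minn (On x j) k)%N : nat)%:R.
have I0 : 0 <= I by rewrite /I ler0n.
case E: (xb x j); rewrite E /= in O1 *.
- case Ek: (On x j < k)%N; rewrite /= ?mul1r ?mul0r ?addr0.
  + have [m em] : exists m, (u = m.+1)%N by exists u.-1; lia.
    apply: (@comb _ _ _ _ _ (I + rho ^+ m.+2 + C) (I + rho ^+ m + C)) => //.
    * case: ifP => hab.
        rewrite Psi1_reset -/C; have := exprn_ge0 m.+2 hr0.
        have : (((c.+1 < minn (On x j.+1) k)%N : nat)%:R : R) <= I by apply: ble; lia.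
        lra.
      by rewrite /= E Ek em mul1r.
    * case: ifP => hab.
        rewrite Psi1_reset -/C; have -> : m = 0%N by lia.
        rewrite expr0; have := ble1 R (c < minn (On x j.+1) k)%N; lra.
      by rewrite /= E Ek em mul1r.
    * rewrite em -(mart m hpq hr); set W := rho ^+ m; set W2 := rho ^+ m.+2.
      have -> : q * (I + W2 + C) + p * (I + W + C) = (p + q) * (I + C) + (p * W + q * W2) by ring.
      by rewrite hpq mul1r; lra.
  + apply: (@comb _ _ _ _ _ (I + C) (I + C)) => //; last by rewrite -mulrDl addrC hpq mul1r.
    * case: ifP => hab.
        by rewrite Psi1_reset -/C lerD2r; apply: ble; lia.
      by rewrite /= E Ek mul0r addr0.
    * case: ifP => hab.
        by rewrite Psi1_reset -/C lerD2r; apply: ble; lia.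
      by rewrite /= E Ek mul0r addr0.
- rewrite mul0r addr0.
  apply: (@comb _ _ _ _ _ (I + C) (I + C)) => //; last by rewrite -mulrDl hpq mul1r.
  + case: ifP => hab.
      by rewrite Psi1_reset -/C lerD2r; apply: ble; lia.
    by rewrite /= E mul0r addr0.
  + case: ifP => hab.
      by rewrite Psi1_reset -/C lerD2r; apply: ble; lia.
    by rewrite /= E mul0r addr0.
Qed.

Lemma alg_cases n k a b h :
  let: (j, u, c) := st a b h in
  [/\ (c < k)%N -> (j < n)%N -> exists i : 'I_n, val i = j /\ alg n k a b h = inl i,
      (c < k)%N -> (n <= j)%N -> alg n k a b h = inr false &
      (k <= c)%N -> alg n k a b h = inr true].
Proof.
rewrite /alg; case: (st a b h) => [[j u] c]; split.
- move=> -> hj; case: insubP => [i _ <-|]; first by exists i.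
  by rewrite hj.
- move=> -> hj; case: insubP => [i hi _|] //; lia.
- by move=> hc; have -> : (c < k)%N = false by lia.
Qed.

Lemma sp_true (R : realType) (p : R) n (x : 'I_n -> bool) (i : 'I_n) :
  step_prob p x (inl i) true = if xb x i then 1 - p else p.
Proof. by rewrite /= xbE; case: (x i). Qed.

Lemma sp_false (R : realType) (p : R) n (x : 'I_n -> bool) (i : 'I_n) :
  step_prob p x (inl i) false = if xb x i then p else 1 - p.
Proof. by rewrite /= xbE; case: (x i). Qed.

Lemma TH_On n k (x : 'I_n -> bool) : TH k x = (k <= On x n)%N.
Proof.
rewrite /TH /On; congr (_ <= _)%N.
by apply: eq_bigr => i _; rewrite xbE.
Qed.

Lemma On_out n (x : 'I_n -> bool) j : (n <= j)%N -> On x j = On x n.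
Proof. by move=> h; apply/eqP; rewrite eqn_leq On_le On_mono. Qed.

Definition Psi (R : realType) n (x : 'I_n -> bool) k a b (rho : R) s :=
  if TH k x then Psi1 x k b rho s else Psi0 x a b rho s.

Lemma Psi_ge0 (R : realType) n (x : 'I_n -> bool) k a b (rho : R) s :
  0 <= rho -> 0 <= Psi x k a b rho s.
Proof.
move=> hr; rewrite /Psi; case: ifP => _; case: s => [[j u] c] /=;
  repeat apply: addr_ge0; rewrite ?mulr_ge0 ?exprn_ge0 ?ler0n //.
Qed.

Lemma error_bound (R : realType) (p : R) n k a b (x : 'I_n -> bool) (d : R) :
  0 < p -> p < 1 / 2 -> (0 < a)%N -> (0 < b)%N -> (0 < k)%N ->
  n%:R * (p / (1 - p)) ^+ a <= d -> k%:R * (p / (1 - p)) ^+ b <= d ->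
  error_le p k (alg n k a b) x d.
Proof.
move=> hp hp2 ha hb hk hd1 hd2 N.
set rho := p / (1 - p).
have hq : 0 < 1 - p by lra.
have hr0 : 0 <= rho by rewrite /rho divr_ge0 //; lra.
have hrq : rho * (1 - p) = p by rewrite /rho divfK //; lra.
have hpq : p + (1 - p) = 1 by lra.
apply: le_trans (_ : Psi x k a b rho (st a b [::]) <= d).
  apply: (@drift R p n x _ N (alg n k a b) (fun h => Psi x k a b rho (st a b h)) (fun h => if alg n k a b h is inr b0 then (b0 != TH k x)%:R else 0)).
  - by apply/andP; split; lra.
  - by move=> h; apply: Psi_ge0.
  move=> h; have := alg_cases n k a b h; have := st_inv h ha hb.
  case E: (st a b h) => [[j u] c] /andP[hu1 hu2] [H1 H2 H3].
  case: (ltnP c k) => hc; last first.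
    rewrite (H3 hc) big_bool /= !mul0r add0r /Psi TH_On.
    case: ifP => hT; first by rewrite add0r; have := Psi_ge0 x k a b (j,u,c) hr0; rewrite /Psi TH_On hT.
    rewrite add0r /=; apply: le_trans (_ : ((On x j < c)%N : nat)%:R <= _).
      apply: (@ble R true) => _; have := On_le x j; lia.
    rewrite -addrA lerDl; apply: addr_ge0; rewrite ?mulr_ge0 ?exprn_ge0 ?ler0n //.
  case: (ltnP j n) => hj; last first.
    rewrite (H2 hc hj) big_bool /= !mul0r add0r /Psi TH_On.
    case: ifP => hT; last by rewrite add0r; have := Psi_ge0 x k a b (j,u,c) hr0; rewrite /Psi TH_On hT.
    rewrite add0r /=; apply: le_trans (_ : ((c < minn (On x j) k)%N : nat)%:R <= _).
      apply: (@ble R true) => _; rewrite On_out //; lia.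
    rewrite -addrA lerDl; apply: addr_ge0; rewrite ?mulr_ge0 ?exprn_ge0 ?ler0n //.
  have [i [hi ->]] := H1 hc hj.
  rewrite big_bool !st_rcons E sp_true sp_false hi [X in _ + X <= _]/= addr0 /Psi.
  case: (TH k x); [apply: Psi1_step | apply: Psi0_step] => //; lra.
have O0 : On x 0 = 0%N by rewrite /On big_ord0.
have Z0 : Zn x 0 = 0%N by rewrite /Zn big_ord0.
rewrite /st /= /Psi; case: ifP => hT.
  rewrite Psi1_reset O0 min0n /= add0r subn0 mulrC.
  apply: le_trans hd2; apply: ler_wpM2r; first exact: exprn_ge0.
  by rewrite ler_nat geq_minr.
rewrite Psi0_reset O0 Z0 /= add0r subn0 mulrC.
apply: le_trans hd1; apply: ler_wpM2r; first exact: exprn_ge0.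
by rewrite ler_nat; have := OZn x (leqnn n); lia.
Qed.

Lemma Phi_ge0 (R : realType) n (x : 'I_n -> bool) k a b j u c :
  (0 < a)%N -> (0 < b)%N -> (0 < u)%N -> (u < a + b)%N -> 0 <= (Phi x k a b (j, u, c) : R).
Proof.
move=> ha hb hu1 hu2 /=; case: ifP => // /andP[hj hc].
have O1 := OnS x j; have O2 : (On x j.+1 <= On x n)%N by apply: On_mono.
have Z1 : Zn x j.+1 = (Zn x j + ~~ xb x j)%N by rewrite ZnS hj.
have Z2 : (Zn x j.+1 <= Zn x n)%N by apply: Zn_mono.
set N := (b * _ + _)%N.
case E: (xb x j); rewrite E /= in O1 Z1.
  have : (u <= N + b)%N by rewrite /N; nia.
  by rewrite -(ler_nat R) natrD => ?; lra.
have : (b <= N + u)%N by rewrite /N; nia.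
by rewrite -(ler_nat R) natrD => ?; lra.
Qed.

Lemma G_scale (R : realType) (p : R) n (A : strategy n) x g (D : R) m :
  G p A x (fun h => D * g h) m = D * G p A x g m.
Proof. by rewrite /G mulr_sumr; apply: eq_bigr => t _; rewrite mulrCA. Qed.

Lemma query_bound (R : realType) (p : R) n k a b (x : 'I_n -> bool) :
  0 < p -> p < 1 / 2 -> (0 < a)%N -> (0 < b)%N ->
  expected_queries_le p (alg n k a b) x ((b * n + a * minn n k)%N%:R / (1 - 2 * p)).
Proof.
move=> hp hp2 ha hb N.
set D : R := 1 - 2 * p.
have hD : 0 < D by rewrite /D; lra.
rewrite ler_pdivlMr // mulrC.
apply: le_trans (_ : Phi x k a b (st a b [::]) <= _).
  have -> : D * \sum_(m < N) prob_more p (alg n k a b) x m =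
     \sum_(m < N) G p (alg n k a b) x (fun h => D * (if alg n k a b h is inl _ then 1 else 0)) m.
    by rewrite mulr_sumr; apply: eq_bigr => m _; rewrite G_scale.
  apply: (@drift R p n x _ N (alg n k a b) (fun h => Phi x k a b (st a b h))).
  - by apply/andP; split; lra.
  - move=> h; have := st_inv h ha hb; case: (st a b h) => [[j u] c] /andP[hu1 hu2].
    exact: Phi_ge0.
  move=> h; have := alg_cases n k a b h; have := st_inv h ha hb.
  case E: (st a b h) => [[j u] c] /andP[hu1 hu2] [H1 H2 H3].
  case: (ltnP c k) => hc; last first.
    rewrite (H3 hc) big_bool /= !mul0r !add0r mulr0; exact: Phi_ge0.
  case: (ltnP j n) => hj; last first.
    rewrite (H2 hc hj) big_bool /= !mul0r !add0r mulr0; exact: Phi_ge0.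
  have [i [hi ->]] := H1 hc hj.
  rewrite big_bool !st_rcons E sp_true sp_false hi [X in _ + X <= _]/= mulr1.
  have [h1 h2] := @Phi_step R n x k a b j u c ha hb hj hc hu1 hu2.
  set X := Phi _ _ _ _ (stp _ _ _ true) in h1 *.
  set Y := Phi _ _ _ _ (stp _ _ _ false) in h2 *.
  set F := Phi _ _ _ _ (j, u, c) in h1 h2 *.
  move: h1 h2; rewrite /D; case: (xb x j) => h1 h2.
    apply: le_trans (_ : (1 - p) * (F + -1) + p * (F - -1) + (1 - 2 * p) <= F).
      rewrite lerD2r; apply: lerD; apply: ler_wpM2l => //; lra.
    have -> : (1 - p) * (F + -1) + p * (F - -1) + (1 - 2 * p) = F by ring.
    by [].
  apply: le_trans (_ : p * (F + 1) + (1 - p) * (F - 1) + (1 - 2 * p) <= F).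
    rewrite lerD2r; apply: lerD; apply: ler_wpM2l => //; lra.
  have -> : p * (F + 1) + (1 - p) * (F - 1) + (1 - 2 * p) = F by ring.
  by [].
rewrite /st /=; case: ifP => // /andP[hn hk].
have O0 : On x 0 = 0%N by rewrite /On big_ord0.
have Z0 : Zn x 0 = 0%N by rewrite /Zn big_ord0.
have := OZn x (leqnn n).
rewrite O0 Z0 !subn0; case: (xb x 0); rewrite subrr addr0 ler_nat => e; nia.
Qed.

Lemma pow_le (R : realType) (p c d : R) m : 0 < p -> p < 1 / 2 -> 0 < c -> 0 < d ->
  ln (c / d) < m%:R * ln ((1 - p) / p) -> c * (p / (1 - p)) ^+ m <= d.
Proof.
move=> hp hp2 hc hd h.
have hq : 0 < 1 - p by lra.
have hr : 0 < (1 - p) / p by rewrite divr_gt0.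
have e1 : p / (1 - p) = expR (- ln ((1 - p) / p)).
  by rewrite -lnV ?posrE // invf_div lnK // posrE divr_gt0.
rewrite e1 -expRM_natl -[c]lnK ?posrE // -expRD -[d in _ <= d]lnK ?posrE //.
rewrite ler_expR; move: h; rewrite ln_div ?posrE //; lra.
Qed.

Lemma real_core (R : realType) (L lam t be al : R) :
  0 < L -> 0 < lam -> 0 < t -> t <= 1 -> lam < be * L -> be * L <= lam + L ->
  0 <= al * L -> al * L <= lam + t^-1 + L ->
  0 <= (be + al * t) * L / lam - 1 /\ (be + al * t) * L / lam - 1 <= (2 * L + 1) / lam + t.
Proof.
move=> hL hl ht ht1 hb1 hb2 ha1 ha2.
have e : (be + al * t) * L / lam - 1 = (be * L - lam + (al * L) * t) / lam.
  by field; lra.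
rewrite e; split.
  apply: divr_ge0; last lra.
  have : 0 <= (al * L) * t by apply: mulr_ge0; lra.
  lra.
rewrite ler_pdivrMr //.
have -> : ((2 * L + 1) / lam + t) * lam = 2 * L + 1 + t * lam by field; lra.
have : (al * L) * t <= (lam + t^-1 + L) * t by apply: ler_wpM2r; lra.
have -> : (lam + t^-1 + L) * t = lam * t + 1 + L * t by field; lra.
have : L * t <= L by rewrite -[X in _ <= X]mulr1; apply: ler_wpM2l; lra.
lra.
Qed.

Lemma trunc_bounds (R : realType) (y L : R) : 0 <= y -> 0 < L ->
  y * L < (Num.trunc y).+1%:R * L /\ (Num.trunc y).+1%:R * L <= y * L + L.
Proof.
move=> hy hL; have h1 := truncnS_gt y; have h2 : (Num.trunc y)%:R <= y by rewrite truncn_le.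
have e : ((Num.trunc y).+1%:R : R) = (Num.trunc y)%:R + 1 by rewrite mulrSr.
rewrite e; split; first by rewrite -e ltr_pM2r.
by rewrite mulrDl mul1r lerD2r ler_pM2r.
Qed.

Lemma trunc_gt (R : realType) (y L : R) : 0 < L -> y * L < (Num.trunc y).+1%:R * L.
Proof. by move=> hL; rewrite ltr_pM2r // truncnS_gt. Qed.

Lemma trivial_alg (R : realType) (p : R) n k (x : 'I_n -> bool) (d T : R) :
  0 < p -> p < 1 / 2 -> 1 <= d ->
  error_le p k (fun _ => inr false : 'I_n + bool) x d /\
  expected_queries_le p (fun _ => inr false : 'I_n + bool) x ((1 + -1) * T).
Proof.
move=> hp hp2 hd; have hp' : 0 <= p <= 1 by apply/andP; split; lra.
split=> N.
  apply: le_trans hd.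
  apply: (@drift R p n x hp' N (fun _ => inr false) (fun _ => 1)
     (fun h => ((false != TH k x) : nat)%:R)) => // h.
  by rewrite big_bool /= !mul0r !add0r; case: (TH k x).
rewrite addrN mul0r.
apply: (@drift R p n x hp' N (fun _ => inr false) (fun _ => 0) (fun h => 0)) => // h.
by rewrite big_bool /= !mul0r !addr0.
Qed.

Unset Implicit Arguments.
Local Open Scope classical_set_scope.
Local Open Scope ring_scope.

Theorem theorem2 (R : realType) (p : R) (k : nat -> nat) (delta : nat -> R) :
  0 < p -> p < 1 / 2 ->
  (forall n, (0 < k n)%N) ->
  (forall n, 0 < delta n) ->
  (fun n => (k n)%:R / n%:R : R) @ \oo --> (0 : R) ->
  delta @ \oo --> (0 : R) ->
  exists eps : nat -> R,
    eps @ \oo --> (0 : R) /\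
    forall n : nat, exists A : strategy n,
      forall x : 'I_n -> bool,
        error_le p (k n) A x (delta n) /\
        expected_queries_le p A x
          ((1 + eps n) * (n%:R * ln ((k n)%:R / delta n) / DKL p)).
Proof.
move=> hp hp2 hk hd hkn hdn.
set L := ln ((1 - p) / p).
have hL : 0 < L by apply: ln_gt0; rewrite ltr_pdivlMr //; lra.
have hDKL : DKL p = (1 - 2 * p) * L by [].
have h2p : 0 < 1 - 2 * p by lra.
set bb := fun n => (Num.trunc (ln ((k n)%:R / delta n) / L)).+1.
set aa := fun n => (Num.trunc (ln (n%:R / delta n) / L)).+1.
set B := fun n => ((bb n * n + aa n * minn n (k n))%N%:R / (1 - 2 * p) : R).
set T := fun n => (n%:R * ln ((k n)%:R / delta n) / DKL p : R).
have lam_pos : forall n, delta n < 1 -> 0 < ln ((k n)%:R / delta n).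
  move=> n h; apply: ln_gt0; rewrite ltr_pdivlMr // mul1r.
  by apply: lt_le_trans h _; rewrite ler1n hk.
exists (fun n => if delta n < 1 then B n / T n - 1 else -1).
split; last first.
  move=> n; case: (boolP (delta n < 1)) => hd1; last first.
    exists (fun _ => inr false) => x; apply: trivial_alg => //.
    by rewrite leNgt.
  exists (alg n (k n) (aa n) (bb n)) => x; split.
    apply: error_bound => //.
    - have [->|n0] := posnP n; first by rewrite mul0r; apply: ltW.
      apply: pow_le => //; first by rewrite ltr0n.
      have := @trunc_gt R (ln (n%:R / delta n) / L) L hL.
      by rewrite divfK ?gt_eqF.
    - apply: pow_le => //; first by rewrite ltr0n.
      have := @trunc_gt R (ln ((k n)%:R / delta n) / L) L hL.
      by rewrite divfK ?gt_eqF.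
  have -> : (1 + (B n / T n - 1)) * (n%:R * ln ((k n)%:R / delta n) / DKL p) = B n.
    have [n0|n0] := posnP n.
      by rewrite /B /T n0 muln0 min0n muln0 addn0 !mul0r mulr0.
    have hT : 0 < T n.
      rewrite /T hDKL; apply: divr_gt0; last exact: mulr_gt0.
      by apply: mulr_gt0; [rewrite ltr0n | exact: lam_pos].
    have -> : 1 + (B n / T n - 1) = B n / T n by ring.
    by rewrite -/(T n) divfK ?gt_eqF.
  exact: query_bound.
move/cvgrPdist_lt : hkn => hkn'.
move/cvgrPdist_lt : hdn => hdn'.
apply/cvgrPdist_lt => e e0.
set M := 2 * (2 * L + 1) / e.
have hM : 0 < M by rewrite /M divr_gt0 //; lra.
have e20 : 0 < e / 2 by rewrite divr_gt0.
near=> n.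
have n0 : (0 < n)%N by near: n; exists 1%N => // m.
have t1 : `|0 - (k n)%:R / n%:R| < 1 :> R by near: n; apply: hkn'.
have t2 : `|0 - (k n)%:R / n%:R| < e / 2 :> R by near: n; apply: hkn'.
have d1 : `|0 - delta n| < 1 :> R by near: n; apply: hdn'.
have d2 : `|0 - delta n| < expR (- M) :> R by near: n; apply: hdn'; exact: expR_gt0.
have dn := hd n.
rewrite sub0r normrN gtr0_norm // in d1 d2.
have kn0 : 0 < (k n)%:R :> R by rewrite ltr0n.
have nn0 : 0 < n%:R :> R by rewrite ltr0n.
have tpos : 0 < (k n)%:R / n%:R :> R by rewrite divr_gt0.
rewrite sub0r normrN gtr0_norm // in t1 t2.
have kn : (k n < n)%N by move: t1; rewrite ltr_pdivrMr // mul1r ltr_nat.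
set t := (k n)%:R / n%:R in t1 t2 tpos.
rewrite d1.
have hlam := lam_pos n d1.
set lam := ln ((k n)%:R / delta n) in hlam.
have eBT : B n / T n = ((bb n)%:R + (aa n)%:R * t) * L / lam.
  rewrite /B /T hDKL (minn_idPr (ltnW kn)) natrD !natrM /t -/lam.
  by field; rewrite !gt_eqF.
have [hb1 hb2] := @trunc_bounds R (lam / L) L (divr_ge0 (ltW hlam) (ltW hL)) hL.
rewrite divfK ?gt_eqF // in hb1 hb2.
have lnn : 0 <= ln (n%:R / delta n).
  by apply: ln_ge0; rewrite ler_pdivlMr // mul1r; apply: ltW; apply: lt_le_trans d1 _; rewrite ler1n.
have [ha1 ha2] := @trunc_bounds R (ln (n%:R / delta n) / L) L (divr_ge0 lnn (ltW hL)) hL.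
rewrite divfK ?gt_eqF // in ha1 ha2.
have split_ln : ln (n%:R / delta n) = ln (n%:R / (k n)%:R) + lam.
  rewrite /lam -lnM ?posrE ?divr_gt0 //; congr ln; field; rewrite !gt_eqF //.
have lnt : ln (n%:R / (k n)%:R) < t^-1.
  by rewrite /t invf_div; apply: ln_sublinear; rewrite divr_gt0.
have [c1 c2] := @real_core R L lam t (bb n)%:R (aa n)%:R hL hlam tpos (ltW t1) hb1 hb2
  (mulr_ge0 (ler0n _ _) (ltW hL)) ltac:(rewrite /aa; lra).
rewrite eBT sub0r normrN ger0_norm //; apply: le_lt_trans c2 _.
have lnd : ln (delta n) < - M.
  by rewrite -[X in _ < X](expRK (- M)) ltr_ln ?posrE ?expR_gt0.
have lk : 0 <= ln (k n)%:R :> R by apply: ln_ge0; rewrite ler1n.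
have hlM : M < lam by rewrite /lam ln_div ?posrE //; lra.
have : (2 * L + 1) / lam < e / 2.
  rewrite ltr_pdivrMr //.
  have -> : 2 * L + 1 = M * (e / 2) by rewrite /M; field; rewrite gt_eqF.
  by rewrite [X in _ < X]mulrC ltr_pM2r.
lra.
Unshelve. all: by end_near.
Qed.
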